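(* Let $n\geq 5$ be an odd integer and let $J_n$ be the flower snark. Then $\beta_\ell(J_n)=4n$ for every integer $\ell\geq 4$, and $\beta_\ell^s(J_n)=4n$ for every integer $\ell\geq 3$.
   Context: Flower snark $J_n$ ($n\geq 5$ odd): take $n$ disjoint stars $K_{1,3}$, the $i$th with vertices $T_i=\{a_i,b_i,c_i,d_i\}$, centre $b_i$ and leaves $a_i,c_i,d_i$; add the cycle $a_1a_2\cdots a_na_1$ and the cycle $c_1c_2\cdots c_nd_1d_2\cdots d_nc_1$. It has $4n$ vertices. $d$ is the shortest-path distance, $d(s,X)=\min_{x\in X}d(s,x)$ for nonempty $X$, $\mathcal{D}_S(X)=(d(s_1,X),\dots,d(s_k,X))$. $S$ is an $\{\ell\}$-resolving set if $\mathcal{D}_S(X)\neq\mathcal{D}_S(Y)$ for all distinct nonempty vertex sets $X,Y$ with $|X|,|Y|\leq\ell$; $S$ is an $\ell$-solid-resolving set if $\mathcal{D}_S(X)\neq\mathcal{D}_S(Y)$ for all distinct nonempty vertex sets $X,Y$ with $|X|\leq\ell$ ($Y$ arbitrary). $\beta_\ell$, $\beta_\ell^s$ denote the minimum sizes of such sets. *)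

(* Defs.v *)
From mathcomp Require Import all_boot.
Set Implicit Arguments. Unset Strict Implicit. Unset Printing Implicit Defensive.

Section Metric.
Variables (T : finType) (e : rel T).

Fixpoint ball (k : nat) (u : T) : {set T} :=
  match k with
  | 0 => [set u]
  | k'.+1 => ball k' u :|: [set y | [exists x in ball k' u, e x y]]
  end.

(* shortest-path distance; every finite distance is < #|T|, so the search
   over 0..#|T|-1 finds it (value #|T| only if unreachable). *)
Definition dist (u v : T) : nat := find (fun k => v \in ball k u) (iota 0 #|T|).

(* d(s, X) = min_{x in X} d(s, x), meaningful for nonempty X *)
Definition dist_set (s : T) (X : {set T}) : nat :=
  \big[minn/#|T|]_(x in X) dist s x.

Definition separates (S X Y : {set T}) : bool :=
  [exists s in S, dist_set s X != dist_set s Y].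

Definition l_resolving (l : nat) (S : {set T}) : bool :=
  [forall X : {set T}, forall Y : {set T},
    [&& X != set0, Y != set0, X != Y, #|X| <= l & #|Y| <= l] ==> separates S X Y].

Definition l_solid_resolving (l : nat) (S : {set T}) : bool :=
  [forall X : {set T}, forall Y : {set T},
    [&& X != set0, Y != set0, X != Y & #|X| <= l] ==> separates S X Y].

(* minimum size of a set satisfying P; the default #|T|.+1 is never the
   size of a vertex set, so beta = k forces existence of such a set *)
Definition min_card (P : pred {set T}) : nat :=
  \big[minn/#|T|.+1]_(S : {set T} | P S) #|S|.

Definition beta (l : nat) : nat := min_card (l_resolving l).
Definition beta_s (l : nat) : nat := min_card (l_solid_resolving l).

End Metric.

(* Flower snark J_n on vertex type 'I_n * 'I_4:
   (i,0)=a_i, (i,1)=b_i, (i,2)=c_i, (i,3)=d_i. *)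
Definition cd_pos (n : nat) (v : 'I_n * 'I_4) : nat :=
  if val v.2 == 2 then val v.1 else n + val v.1.
Arguments cd_pos n : clear implicits.

Definition flower_adj (n : nat) : rel ('I_n * 'I_4) :=
  fun u v =>
    let i := val u.1 in let t := val u.2 in
    let j := val v.1 in let s := val v.2 in
    [||
        (i == j) && (((t == 1) && (s != 1)) || ((s == 1) && (t != 1))),
        [&& t == 0, s == 0 & (j == (i + 1) %% n) || (i == (j + 1) %% n)]
      | (* cycle c_1..c_n d_1..d_n c_1, positions c_i -> i, d_i -> n+i *)
        [&& 2 <= t, 2 <= s &
          (cd_pos n v == (cd_pos n u + 1) %% (2 * n))
          || (cd_pos n u == (cd_pos n v + 1) %% (2 * n))]].
Arguments flower_adj n : clear implicits.

(* Main.v *)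
Require Import Defs.
From mathcomp Require Import all_boot zify.
Set Implicit Arguments. Unset Strict Implicit. Unset Printing Implicit Defensive.

Section Gen.
Variables (T : finType) (e : rel T).

Lemma card_pos (v : T) : 0 < #|T|.
Proof. by apply/card_gt0P; exists v. Qed.

Lemma dist_le k u v : k < #|T| -> v \in ball e k u -> dist e u v <= k.
Proof.
move=> hk hv; rewrite /dist leqNgt; apply/negP => H.
have := before_find 0 H; rewrite nth_iota // add0n hv //.
Qed.

Lemma dist_leT u v : dist e u v <= #|T|.
Proof. by rewrite /dist -{2}(size_iota 0 #|T|) find_size. Qed.

Lemma dist_spec u v : dist e u v < #|T| -> v \in ball e (dist e u v) u.
Proof.
move=> h; have h' := h; rewrite /dist -{2}(size_iota 0 #|T|) -has_find in h'.
have := nth_find 0 h'; rewrite nth_iota //.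
Qed.

Lemma dist_self u : dist e u u = 0.
Proof. apply/eqP; rewrite -leqn0; apply: dist_le; [exact: card_pos u| by rewrite /= set11]. Qed.

Lemma dist_pos u x : x != u -> 0 < dist e u x.
Proof.
move=> hx; rewrite lt0n; apply/negP => /eqP h.
have := dist_spec (u:=u) (v:=x); rewrite h => H.
have := H (card_pos u); rewrite /= inE; apply/negP; exact: hx.
Qed.

Lemma bigmin_le (I : eqType) (r : seq I) (P : pred I) F d x :
  x \in r -> P x -> \big[minn/d]_(y <- r | P y) F y <= F x.
Proof.
elim: r => //= y r IH; rewrite inE big_cons; case/orP => [/eqP<-|xr] Px.
  by rewrite Px geq_minl.
case: (P y); last exact: IH.
by rewrite geq_min IH ?orbT.
Qed.

Lemma dist_set_le s (X : {set T}) x : x \in X -> dist_set e s X <= dist e s x.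
Proof.
move=> hx; rewrite /dist_set; apply: bigmin_le => //; by rewrite mem_index_enum.
Qed.

Lemma dist_set_leT s (X : {set T}) : dist_set e s X <= #|T|.
Proof.
rewrite /dist_set; apply: (big_ind (fun r => r <= #|T|)) => //.
  by move=> a b ha hb; rewrite geq_min ha.
move=> i _; exact: dist_leT.
Qed.

Lemma dist_set_ge s (X : {set T}) m : m <= #|T| -> (forall x, x \in X -> m <= dist e s x) ->
  m <= dist_set e s X.
Proof.
move=> h1 h2; rewrite /dist_set; apply: (big_ind (fun r => m <= r)) => //.
  by move=> a b ha hb; rewrite leq_min ha.
Qed.

Lemma dist_set_N s v (X : {set T}) : s != v -> [set x | e x v] \subset X ->
  dist_set e s X <= dist e s v.
Proof.
move=> hsv hN.
case: (ltnP (dist e s v) #|T|) => h; last by apply: leq_trans (dist_set_leT _ _) h.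
have hb := dist_spec h.
move: hb; case E: (dist e s v) => [|k].
  by rewrite /= inE eq_sym (negbTE hsv).
rewrite /= in_setU inE => /orP [hb | ].
  have hk : k < #|T| by rewrite E in h; apply: leq_trans h.
  by have := dist_le hk hb; rewrite E ltnn.
case/existsP => x /andP [hx hxv].
have hk : k < #|T| by rewrite E in h; apply: leq_trans h.
apply: leq_trans (dist_set_le s (x:=x) _) _.
  by apply: (subsetP hN); rewrite inE.
by apply: leq_trans (dist_le hk hx) _.
Qed.

Lemma dist_set_U1 s v (X : {set T}) : s != v -> [set x | e x v] \subset X ->
  dist_set e s (v |: X) = dist_set e s X.
Proof.
move=> hsv hN; apply/eqP; rewrite eqn_leq; apply/andP; split.
  apply: dist_set_ge; first exact: dist_set_leT.
  by move=> x hx; apply: dist_set_le; rewrite in_setU1 hx orbT.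
apply: dist_set_ge; first exact: dist_set_leT.
move=> x; rewrite in_setU1 => /orP [/eqP -> | hx]; first exact: dist_set_N.
exact: dist_set_le.
Qed.

Lemma sepT (X Y : {set T}) : X != Y -> separates e setT X Y.
Proof.
move=> hXY.
case/boolP: [exists x, (x \in X) != (x \in Y)] => [/existsP [x hx] | /existsPn H]; last first.
  case/negP: hXY; apply/eqP/setP => x; by move/negPn/eqP: (H x).
apply/existsP; exists x; rewrite in_setT /=.
have key : forall A B : {set T}, x \in A -> x \notin B -> dist_set e x A != dist_set e x B.
  move=> A B hA hB.
  have h0 : dist_set e x A = 0.
    by apply/eqP; rewrite -leqn0; apply: leq_trans (dist_set_le x hA) _; rewrite dist_self.
  rewrite h0 eq_sym -lt0n; apply: dist_set_ge; first exact: card_pos x.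
  move=> y hy; apply: dist_pos; apply/eqP => hyx; by rewrite -hyx hy in hB.
by case: (boolP (x \in X)) hx => hX; case: (boolP (x \in Y)) => hY //= _;
  [apply: key | rewrite eq_sym; apply: key].
Qed.

Hypothesis hN : forall v, [/\ [set x | e x v] != set0, v \notin [set x | e x v] &
  #|[set x | e x v]| <= 3].

Lemma forced (S : {set T}) v :
  separates e S [set x | e x v] (v |: [set x | e x v]) -> v \in S.
Proof.
case: (hN v) => hne hv hc.
case/existsP => s /andP [hs hd].
case: (eqVneq s v) => [<- // | hsv].
by rewrite dist_set_U1 ?eqxx in hd.
Qed.

Lemma solid_all l S : 3 <= l -> l_solid_resolving e l S -> S = setT.
Proof.
move=> hl hS; apply/setP => v; rewrite in_setT; apply: forced.
case: (hN v) => hne hv hc.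
move/forallP: hS => /(_ [set x | e x v]) /forallP /(_ (v |: [set x | e x v])).
move/implyP; apply; rewrite hne /=.
apply/and3P; split.
- by apply/set0Pn; exists v; rewrite setU11.
- by apply/eqP => /setP /(_ v); rewrite setU11 (negbTE hv).
- exact: leq_trans hc hl.
Qed.

Lemma res_all l S : 4 <= l -> l_resolving e l S -> S = setT.
Proof.
move=> hl hS; apply/setP => v; rewrite in_setT; apply: forced.
case: (hN v) => hne hv hc.
move/forallP: hS => /(_ [set x | e x v]) /forallP /(_ (v |: [set x | e x v])).
move/implyP; apply; rewrite hne /=.
apply/and4P; split.
- by apply/set0Pn; exists v; rewrite setU11.
- by apply/eqP => /setP /(_ v); rewrite setU11 (negbTE hv).
- by apply: leq_trans hc _; apply: leq_trans _ hl.
- by rewrite cardsU1 hv; apply: leq_trans hl.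
Qed.

Lemma min_cardT (P : pred {set T}) : (forall S, P S -> S = setT) -> P setT ->
  min_card P = #|T|.
Proof.
move=> h1 h2; apply/eqP; rewrite eqn_leq; apply/andP; split.
  rewrite /min_card -{2}(cardsT T); apply: bigmin_le => //; by rewrite mem_index_enum.
rewrite /min_card; apply: (big_ind (fun r => #|T| <= r)) => //.
  by move=> a b ha hb; rewrite leq_min ha.
by move=> S /h1 ->; rewrite cardsT.
Qed.

Lemma betaT l : 4 <= l -> beta e l = #|T|.
Proof.
move=> hl; apply: min_cardT; first by move=> S; exact: res_all.
apply/forallP => X; apply/forallP => Y; apply/implyP => /and5P [_ _ h _ _]; exact: sepT.
Qed.

Lemma beta_sT l : 3 <= l -> beta_s e l = #|T|.
Proof.
move=> hl; apply: min_cardT; first by move=> S; exact: solid_all.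
apply/forallP => X; apply/forallP => Y; apply/implyP => /and4P [_ _ h _]; exact: sepT.
Qed.
End Gen.
Lemma modS_neq m i : i < m -> 1 < m -> (i == (i+1) %% m) = false.
Proof.
move=> hi hm; apply/negbTE; case: (ltnP i.+1 m) => h.
  by rewrite addn1 modn_small // neq_ltn ltnSn.
have -> : i + 1 = m by lia.
rewrite modnn; lia.
Qed.

Lemma modS_inj m i j : i < m -> j < m -> (i+1) %% m = (j+1) %% m -> i = j.
Proof.
move=> hi hj /eqP; rewrite eqn_modDr (modn_small hi) (modn_small hj); by move/eqP.
Qed.

Lemma cd_pos_lt n (v : 'I_n * 'I_4) : cd_pos n v < 2 * n.
Proof. have h : val v.1 < n := ltn_ord v.1. rewrite /cd_pos; case: ifP => _; lia. Qed.

Lemma pair_eq n (x y : 'I_n * 'I_4) : val x.1 = val y.1 -> val x.2 = val y.2 -> x = y.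
Proof. case: x y => [a b] [c d] /= h1 h2; by rewrite (val_inj h1) (val_inj h2). Qed.

Lemma cd_pos_inj n (x y : 'I_n * 'I_4) : 2 <= val x.2 -> 2 <= val y.2 ->
  cd_pos n x = cd_pos n y -> x = y.
Proof.
have h1 : val x.1 < n := ltn_ord x.1. have h2 : val y.1 < n := ltn_ord y.1.
have h3 : val x.2 < 4 := ltn_ord x.2. have h4 : val y.2 < 4 := ltn_ord y.2.
rewrite /cd_pos; case: ifP => /eqP hx; case: ifP => /eqP hy => *; apply: pair_eq; lia.
Qed.

Lemma card3 (T : finType) (A B C D : {set T}) : D \subset A :|: B :|: C ->
  #|A| <= 1 -> #|B| <= 1 -> #|C| <= 1 -> #|D| <= 3.
Proof.
move=> hD hA hB hC; apply: leq_trans (subset_leq_card hD) _.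
apply: leq_trans (leq_card_setU _ _) _.
rewrite -[3]/(2 + 1) leq_add // (leq_trans (leq_card_setU _ _)) //.
by rewrite -[2]/(1 + 1) leq_add.
Qed.

Lemma flower_N n (v : 'I_n * 'I_4) : 3 <= n ->
  [/\ [set x | flower_adj n x v] != set0, v \notin [set x | flower_adj n x v] &
  #|[set x | flower_adj n x v]| <= 3].
Proof.
move=> hn; split.
- apply/set0Pn; case: (boolP (val v.2 == 1)) => h.
    by exists (v.1, (ord0 : 'I_4)); rewrite inE /flower_adj /= eqxx h.
  by exists (v.1, (Ordinal (isT : 1 < 4))); rewrite inE /flower_adj /= eqxx h.
- have h1 := cd_pos_lt v. have h2 : val v.1 < n := ltn_ord v.1.
  rewrite inE /flower_adj !orbb (modS_neq h1) ?(modS_neq h2); try lia.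
case: (boolP (val v.2 == 1)) => h.
  apply: (@card3 _ [set x | (x.1 == v.1) && (val x.2 == 0)]
     [set x | (x.1 == v.1) && (val x.2 == 2)] [set x | (x.1 == v.1) && (val x.2 == 3)]
     [set x | flower_adj n x v]).
  - apply/subsetP => [[xi [t ht4]]]; rewrite !inE /flower_adj (eqP h) /= !andbF !orbF.
    case/andP => /eqP e1 ht; rewrite (_ : xi == v.1 = true) /=; last exact/eqP/val_inj.
    by move: ht ht4; case: t => [|[|[|[|t]]]].
  - by apply/card_le1_eqP => x y; rewrite !inE => /andP[/eqP h1 /eqP h2] /andP[/eqP h3 /eqP h4];
       apply: pair_eq; rewrite ?h1 ?h2 ?h3 ?h4.
  - by apply/card_le1_eqP => x y; rewrite !inE => /andP[/eqP h1 /eqP h2] /andP[/eqP h3 /eqP h4];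
       apply: pair_eq; rewrite ?h1 ?h2 ?h3 ?h4.
  - by apply/card_le1_eqP => x y; rewrite !inE => /andP[/eqP h1 /eqP h2] /andP[/eqP h3 /eqP h4];
       apply: pair_eq; rewrite ?h1 ?h2 ?h3 ?h4.
apply: (@card3 _ [set x | (x.1 == v.1) && (val x.2 == 1)]
  [set x | [&& val x.2 == 0, val v.2 == 0 & val v.1 == (val x.1 + 1) %% n]
        || [&& 2 <= val x.2, 2 <= val v.2 & cd_pos n v == (cd_pos n x + 1) %% (2 * n)]]
  [set x | [&& val x.2 == 0, val v.2 == 0 & val x.1 == (val v.1 + 1) %% n]
        || [&& 2 <= val x.2, 2 <= val v.2 & cd_pos n x == (cd_pos n v + 1) %% (2 * n)]]
  [set x | flower_adj n x v]).
- apply/subsetP => [[xi [t ht4]]]; rewrite !inE /flower_adj (negbTE h) /= ?andbF ?orbF ?andbT.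
  case/or3P => [H | /and3P[a b /orP[c|c]] | /and3P[a b /orP[c|c]]].
  + by apply/orP; left; apply/orP; left; exact: H.
  + by apply/orP; left; apply/orP; right; apply/orP; left; rewrite a b c.
  + by apply/orP; right; apply/orP; left; rewrite a b c.
  + by apply/orP; left; apply/orP; right; apply/orP; right; rewrite a b c.
  + by apply/orP; right; apply/orP; right; rewrite a b c.
- by apply/card_le1_eqP => x y; rewrite !inE => /andP[/eqP h1 /eqP h2] /andP[/eqP h3 /eqP h4];
     apply: pair_eq; rewrite ?h1 ?h2 ?h3 ?h4.
- have hv1 : val v.1 < n := ltn_ord v.1.
  apply/card_le1_eqP => x y hx hy; apply/esym; move: hx hy; rewrite !inE.
  have hx1 : val x.1 < n := ltn_ord x.1. have hy1 : val y.1 < n := ltn_ord y.1.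
  case/orP => /and3P [a b /eqP c]; case/orP => /and3P [a' b' /eqP c'].
  + apply: pair_eq; last by rewrite (eqP a) (eqP a').
    apply: (modS_inj hx1 hy1); by rewrite -c -c'.
  + by rewrite (eqP b) in b'.
  + by rewrite (eqP b') in b.
  + apply: cd_pos_inj => //; apply: (modS_inj (cd_pos_lt x) (cd_pos_lt y)); by rewrite -c -c'.
- apply/card_le1_eqP => x y hx hy; apply/esym; move: hx hy; rewrite !inE.
  case/orP => /and3P [a b /eqP c]; case/orP => /and3P [a' b' /eqP c'].
  + apply: pair_eq; first by rewrite c c'.
    by rewrite (eqP a) (eqP a').
  + by rewrite (eqP b) in b'.
  + by rewrite (eqP b') in b.
  + by apply: cd_pos_inj => //; rewrite c c'.
Qed.

Theorem mainTheorem14 (n : nat) :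
  5 <= n -> odd n ->
  (forall l : nat, 4 <= l -> beta (flower_adj n) l = 4 * n) /\
  (forall l : nat, 3 <= l -> beta_s (flower_adj n) l = 4 * n).
Proof.
move=> hn _.
have hN : forall v, [/\ [set x | flower_adj n x v] != set0,
    v \notin [set x | flower_adj n x v] & #|[set x | flower_adj n x v]| <= 3].
  by move=> v; apply: flower_N; apply: leq_trans hn.
have hc : #|{: 'I_n * 'I_4}| = 4 * n by rewrite card_prod !card_ord mulnC.
split=> l hl; rewrite -hc.
- exact: betaT hN _ hl.
- exact: beta_sT hN _ hl.
Qed.
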